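(* Let $a,d\in\mathbb C$ with $a\notin\mathbb Z$ and $d\notin\{0,-1,-2,\dots\}$. Then, as an identity of formal power series in $x,y$, $${}_1F_1(a;d;x)\,{}_0F_1(1-a;y)=\mathrm H_5(a;d;x,-y)+\sum_{k=1}^\infty\sum_{l=1}^k\frac{(-1)^{k-l}(k-1)!}{(l-1)!\,l!\,(k-l)!}\,\frac{1}{(1-a)_k(1-a)_{k-l}(d)_l}\,x^ly^k\,\mathrm H_5(a-k+l;d+l;x,-y).$$
   Context: Pochhammer symbol: $(\lambda)_k=\Gamma(\lambda+k)/\Gamma(\lambda)$ for every integer $k$ (possibly negative) whenever defined; $(\lambda)_0=1$. ${}_1F_1(a;c;x)=\sum_{k\ge0}\frac{(a)_k}{(c)_k k!}x^k$, ${}_0F_1(c;x)=\sum_{k\ge0}\frac{x^k}{(c)_k k!}$. Confluent Horn function $\mathrm H_5(a;d;x,y)=\sum_{p,q\ge0}\frac{(a)_{p-q}}{(d)_p\,p!\,q!}x^py^q$. All functions are regarded as formal power series in $x,y$; the infinite double sum converges in the formal (degree) topology. *)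

(* Defs.v *)
From HB Require Import structures.
From mathcomp Require Import all_boot all_order all_algebra.
Set Implicit Arguments. Unset Strict Implicit. Unset Printing Implicit Defensive.
Import Order.TTheory GRing.Theory Num.Theory.
Local Open Scope ring_scope.

(* Pochhammer symbol (x)_k = Gamma(x+k)/Gamma(x) for k : int.
   k = n >= 0 : x (x+1) ... (x+n-1);
   k = -(n+1) : 1 / ((x-1)(x-2)...(x-(n+1))). *)
Definition poch {R : fieldType} (x : R) (k : int) : R :=
  match k with
  | Posz n => \prod_(i < n) (x + i%:R)
  | Negz n => (\prod_(i < n.+1) (x - (i.+1)%:R))^-1
  end.

(* Formal power series in two variables x, y: f i j is the coefficient of x^i y^j. *)
Definition fps2 (R : Type) := nat -> nat -> R.

Definition fps2_add {R : fieldType} (f g : fps2 R) : fps2 R :=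
  fun i j => f i j + g i j.

Definition fps2_mul {R : fieldType} (f g : fps2 R) : fps2 R :=
  fun i j => \sum_(i1 < i.+1) \sum_(j1 < j.+1) f i1 j1 * g (i - i1)%N (j - j1)%N.

Definition fps2_scale {R : fieldType} (c : R) (f : fps2 R) : fps2 R :=
  fun i j => c * f i j.

Definition fps2_shift {R : fieldType} (l k : nat) (f : fps2 R) : fps2 R :=
  fun i j => if (l <= i)%N && (k <= j)%N then f (i - l)%N (j - k)%N else 0.

Definition fps2_negy {R : fieldType} (f : fps2 R) : fps2 R :=
  fun i j => (-1) ^+ j * f i j.

(* The formal sum  \sum_{k >= 1} \sum_{l = 1}^{k} x^l y^k G k l  in the degree
   topology: the coefficient of x^i y^j only receives contributions from
   k + l <= i + j, so truncating at k <= i + j computes it exactly. *)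
Definition fps2_sum_xy {R : fieldType} (G : nat -> nat -> fps2 R) : fps2 R :=
  fun i j => \sum_(1 <= k < (i + j).+1) \sum_(1 <= l < k.+1)
               fps2_shift l k (G k l) i j.

Definition F11 {R : fieldType} (a c : R) : fps2 R :=
  fun i j => if j == 0%N then poch a i / (poch c i * (i`!)%:R) else 0.

Definition F01 {R : fieldType} (c : R) : fps2 R :=
  fun i j => if i == 0%N then (poch c j * (j`!)%:R)^-1 else 0.

Definition H5 {R : fieldType} (a d : R) : fps2 R :=
  fun p q => poch a (p%:Z - q%:Z) / (poch d p * (p`!)%:R * (q`!)%:R).

(* Main.v *)
Require Import Defs.
From HB Require Import structures.
From mathcomp Require Import all_boot all_order all_algebra.
From mathcomp Require Import ring lra zify.
Set Implicit Arguments. Unset Strict Implicit. Unset Printing Implicit Defensive.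
Import Order.TTheory GRing.Theory Num.Theory.
Local Open Scope ring_scope.

Section P.
Variable R : fieldType.
Implicit Types x y : R.

Lemma pochS x (n : nat) : poch x n.+1 = poch x n * (x + n%:R).
Proof. by rewrite /= big_ord_recr. Qed.

Lemma poch0 x : poch x 0 = 1.
Proof. by rewrite /= big_ord0. Qed.

Lemma poch_add_nat x (m n : nat) : poch x (m + n)%N = poch x m * poch (x + m%:R) n.
Proof.
elim: n => [|n IH]; first by rewrite addn0 poch0 mulr1.
by rewrite addnS !pochS IH natrD addrA mulrA.
Qed.

Lemma poch_rev x (n : nat) : poch (x - n%:R) n = (-1) ^+ n * poch (1 - x) n.
Proof.
rewrite /= (reindex_inj rev_ord_inj) /= -[X in (-1) ^+ X](card_ord n) -prodrN.
apply: eq_bigr => i _; rewrite subnS.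
have h : n = (((n - i).-1 + i).+1)%N by case: i => /= i; lia.
rewrite [in n%:R]h -addn1 !natrD. ring.
Qed.
End P.

Section Q.
Variable R : fieldType.
Implicit Types x y : R.
Definition nonint x := forall z : int, x != z%:~R.

Lemma nonint_prod x n : nonint x -> \prod_(i < n) (x - (i.+1)%:R) != 0.
Proof.
move=> hx; rewrite prodf_seq_neq0; apply/allP => i _ /=.
rewrite subr_eq0; have := hx i.+1%:Z; by rewrite pmulrn.
Qed.

Lemma poch_step x (m : int) : nonint x -> poch x (m + 1) = poch x m * (x + m%:~R).
Proof.
move=> hx; case: m => [n|[|n]].
- by rewrite -PoszD addn1 pochS pmulrn.
- have -> : Negz 0 + 1 = 0 by [].
  rewrite /= big_ord_recr big_ord0 /= mul1r NegzE mulrNz pmulrn big_ord0 mulVf //.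
  have := hx 1; by rewrite subr_eq0.
- have -> : Negz n.+1 + 1 = Negz n by rewrite !NegzE; lia.
  rewrite /= [X in _ = X^-1 * _]big_ord_recr /= invfM NegzE mulrNz pmulrn -mulrA mulVf ?mulr1 //.
  have := hx n.+2%:Z; by rewrite subr_eq0.
Qed.

Lemma nonintD x (m : int) : nonint x -> nonint (x + m%:~R).
Proof.
move=> hx z; apply/negP => /eqP h; have := hx (z - m); rewrite rmorphB /= -h.
by rewrite addrK eqxx.
Qed.

Lemma poch_addn x (m : int) (n : nat) : nonint x ->
  poch x (m + n%:Z) = poch x m * poch (x + m%:~R) n.
Proof.
move=> hx; elim: n => [|n IH]; first by rewrite addr0 poch0 mulr1.
have -> : m + n.+1%:Z = (m + n%:Z) + 1 by lia.
rewrite poch_step // IH pochS -mulrA; congr (_ * _).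
by rewrite rmorphD /= addrA.
Qed.

Lemma poch_addz x (m t : int) : nonint x ->
  poch x (m + t) = poch x m * poch (x + m%:~R) t.
Proof.
move=> hx; case: t => [n|n]; first exact: poch_addn.
have hm : m = (m + Negz n) + n.+1%:Z by rewrite NegzE; lia.
move: (m + Negz n) hm => u hm; subst m.
have hP : poch (x + u%:~R) n.+1 = \prod_(i < n.+1) (x + (u + n.+1%:Z)%:~R - (i.+1)%:R).
  rewrite /= (reindex_inj rev_ord_inj) /=; apply: eq_bigr => i _.
  rewrite rmorphD /= -!pmulrn natrB; last by case: i => /= i; lia.
  ring.
have := poch_addn u n.+1 hx; rewrite hP => ->.
rewrite /= -mulrA mulfV ?mulr1 //.
have := nonint_prod n.+1 (nonintD (u + n.+1%:Z) hx); by [].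
Qed.
End Q.

Arguments poch {R} x k : simpl never.
Lemma pochE (R : fieldType) (x : R) (n : nat) : poch x n = \prod_(i < n) (x + i%:R).
Proof. by []. Qed.
Section V.
Variable R : fieldType.
Implicit Types x y : R.

Lemma rvand x y n :
  \sum_(k < n.+1) 'C(n, k)%:R * poch x k * poch y (n - k)%N = poch (x + y) n.
Proof.
elim: n => [|n IH]; first by rewrite big_ord_recl big_ord0 !poch0 /= !mulr1 addr0.
have E1 : \sum_(k < n.+2) 'C(n.+1, k)%:R * poch x k * poch y (n.+1 - k)%N =
  \sum_(k < n.+2) 'C(n, k)%:R * poch x k * poch y (n.+1 - k)%N +
  \sum_(k < n.+1) 'C(n, k)%:R * poch x k.+1 * poch y (n - k)%N.
  rewrite big_ord_recl [X in _ = X + _]big_ord_recl !bin0 -addrA; congr (_ + _).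
  rewrite -big_split; apply: eq_bigr => i _.
  by rewrite binS natrD !mulrDl.
have E2 : \sum_(k < n.+2) 'C(n, k)%:R * poch x k * poch y (n.+1 - k)%N =
  \sum_(k < n.+1) 'C(n, k)%:R * poch x k * poch y (n - k)%N * (y + (n - k)%N%:R).
  rewrite big_ord_recr /= bin_small // !mul0r addr0.
  apply: eq_bigr => i _; rewrite subSn; last by case: i => /= i; lia.
  by rewrite pochS mulrA.
rewrite E1 E2 pochS -IH mulr_suml -big_split /=; apply: eq_bigr => i _.
rewrite pochS natrB; last by case: i => /= i; lia.
ring.
Qed.
End V.

Section W.
Variable R : numClosedFieldType.
Implicit Types x y : R.

Lemma poch_neq0 x (n : nat) : (forall q : nat, x + q%:R != 0) -> poch x n != 0.
Proof.
move=> h; rewrite pochE prodf_seq_neq0; apply/allP => q _ /=; exact: h.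
Qed.

Lemma fact_neq0 n : (n`!)%:R != 0 :> R.
Proof. by rewrite pnatr_eq0 -lt0n fact_gt0. Qed.

Lemma poch_nat (i k : nat) : poch (i%:R : R) k = ('C(i + k - 1, k) * k`!)%:R.
Proof.
rewrite bin_ffact ffact_prod natr_prod pochE (reindex_inj rev_ord_inj) /=.
apply: eq_bigr => q _; rewrite -natrD; congr (_%:R); case: q => /= q; lia.
Qed.

Lemma vand1 (i k : nat) : (0 < k)%N ->
  (\sum_(1 <= l < k.+1) 'C(k.-1, l.-1) * 'C(i, l))%N = 'C(i + k.-1, k).
Proof.
move=> hk; rewrite -binomial.Vandermonde -(big_mkord xpredT (fun l => 'C(i, l) * 'C(k.-1, k - l))%N).
rewrite [in RHS]big_ltn // (@bin_small k.-1 (k - 0)); last lia.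
rewrite muln0 add0n; apply: eq_big_nat => l /andP [h1 h2].
rewrite mulnC -(@bin_sub k.-1 l.-1); last lia.
have -> : (k.-1 - l.-1 = k - l)%N by lia.
by [].
Qed.

Lemma mul_coef (f g : fps2 R) i j :
  (forall p q, q != 0%N -> f p q = 0) -> (forall p q, p != 0%N -> g p q = 0) ->
  fps2_mul f g i j = f i 0%N * g 0%N j.
Proof.
move=> hf hg; rewrite /fps2_mul big_ord_recr /= big1; last first.
  move=> p _; apply: big1 => q _; rewrite hg ?mulr0 //; case: p => /= p; lia.
rewrite add0r big_ord_recl /= big1 ?addr0 ?subnn ?subn0 //.
by move=> q _; rewrite hf ?mul0r.
Qed.
End W.

Section M.
Variable R : numClosedFieldType.
Variables (a d : R).
Hypothesis ha : forall z : int, a != z%:~R.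
Hypothesis hd : forall n : nat, d != - n%:R.

Definition Gf := fun k l : nat =>
       fps2_scale
         ((-1) ^+ (k - l) * ((k.-1)`!)%:R / ((l.-1)`!)%:R / (l`!)%:R / ((k - l)`!)%:R
          / (poch (1 - a) k * poch (1 - a) (k - l)%N * poch d l))
         (fps2_negy (H5 (a - k%:R + l%:R) (d + l%:R))).

Lemma P1_neq0 (n : nat) : poch (1 - a) n != 0.
Proof.
apply: poch_neq0 => q; apply/negP => /eqP h; move: (ha (q.+1%:Z)) => /negP; apply.
rewrite -pmulrn -subr_eq0.
have -> : a - q.+1%:R = -(1 - a + q%:R) by rewrite -natr1; ring.
by rewrite h oppr0.
Qed.

Lemma Pd_neq0 (n : nat) : poch d n != 0.
Proof.
apply: poch_neq0 => q; apply/negP => /eqP h; move: (hd q) => /negP; apply.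
by rewrite -[d](addrK q%:R) h sub0r.
Qed.

Lemma nonint_sub (s : nat) : nonint (a - s%:R).
Proof.
have := nonintD (- s%:Z) ha; by rewrite mulrNz.
Qed.

Lemma f1 (i j k l : nat) : (l <= k)%N -> (l <= i)%N -> (k <= j)%N ->
  poch (a - k%:R + l%:R) ((i - l)%N%:Z - (j - k)%N%:Z) =
  poch a (i%:Z - j%:Z) * poch (1 - a) (k - l)%N / (-1) ^+ (k - l).
Proof.
move=> hlk hli hkj; set s := (k - l)%N.
have e1 : a - k%:R + l%:R = a - s%:R by rewrite /s natrB //; ring.
have e2 : (i - l)%N%:Z - (j - k)%N%:Z = s%:Z + (i%:Z - j%:Z).
  rewrite /s; lia.
rewrite e1 e2 poch_addz; last exact: nonint_sub.
rewrite poch_rev -exprVn invrN1.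
have -> : a - s%:R + (s%:Z)%:~R = a by rewrite -pmulrn; ring.
ring.
Qed.

Lemma term (i j k l : nat) : (1 <= l)%N -> (l <= k)%N ->
  fps2_shift l k (Gf k l) i j =
  if (k <= j)%N then
    poch a (i%:Z - j%:Z) / (poch d i * (i`!)%:R) *
    ((-1) ^+ (j - k) / (poch (1 - a) k * ((j - k)`!)%:R)) *
    ('C(k.-1, l.-1) * 'C(i, l))%:R
  else 0.
Proof.
move=> h1l hlk; rewrite /fps2_shift.
have [hli|hli] := leqP l i; last first.
  rewrite /= (@bin_small i l) // muln0 mulr0; by case: ifP.
have [hkj|hkj] := leqP k j; last by [].
rewrite /= /Gf /fps2_scale /fps2_negy /H5 f1 //.
have f2 : poch d i = poch d l * poch (d + l%:R) (i - l)%N.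
  by rewrite -poch_add_nat subnKC.
have f3 : ((k.-1)`!)%:R = 'C(k.-1, l.-1)%:R * ((l.-1)`!)%:R * ((k - l)`!)%:R :> R.
  have e : (k - l = k.-1 - l.-1)%N by lia.
  rewrite e -!natrM -mulnA bin_fact //; lia.
have f4 : (i`!)%:R = 'C(i, l)%:R * (l`!)%:R * ((i - l)`!)%:R :> R.
  by rewrite -!natrM -mulnA bin_fact.
have hPd := Pd_neq0 l.
have hPd' : poch (d + l%:R) (i - l)%N != 0.
  by apply/negP => /eqP h; move: (Pd_neq0 i); rewrite f2 h mulr0 eqxx.
have := P1_neq0 k; have := P1_neq0 (k - l); have := fact_neq0 R (l.-1);
have := fact_neq0 R l; have := fact_neq0 R (k - l); have := fact_neq0 R (i - l);
have := fact_neq0 R (j - k).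
rewrite f2 f3 f4 natrM.
move=> n1 n2 n3 n4 n5 n6 n7.
field.
by rewrite n1 n2 n3 n4 n5 n6 n7 hPd hPd' pnatr_eq0 -lt0n bin_gt0 hli expf_neq0 // oppr_eq0 oner_eq0.
Qed.

Lemma sumxy (i j : nat) : fps2_sum_xy Gf i j =
  poch a (i%:Z - j%:Z) / (poch d i * (i`!)%:R) *
  \sum_(1 <= k < j.+1) ((-1) ^+ (j - k) / (poch (1 - a) k * ((j - k)`!)%:R)) * 'C(i + k.-1, k)%:R.
Proof.
rewrite /fps2_sum_xy (@big_cat_nat _ _ _ j.+1) //=; last lia.
rewrite [X in _ + X]big1_seq ?addr0; last first.
  move=> k /andP [_ hk]; rewrite mem_index_iota in hk.
  apply: big1_seq => l /andP [_ hl]; rewrite mem_index_iota in hl.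
  rewrite term; [|lia|lia]; rewrite ifN //; lia.
rewrite mulr_sumr; apply: eq_big_nat => k /andP [h1k hkj].
have -> : \sum_(1 <= l < k.+1) fps2_shift l k (Gf k l) i j =
  \sum_(1 <= l < k.+1) (poch a (i%:Z - j%:Z) / (poch d i * (i`!)%:R) *
    ((-1) ^+ (j - k) / (poch (1 - a) k * ((j - k)`!)%:R)) *
    ('C(k.-1, l.-1) * 'C(i, l))%:R).
  apply: eq_big_nat => l /andP [h1 h2]; rewrite term; [|lia|lia]; rewrite ifT //; lia.
by rewrite -mulr_sumr -natr_sum vand1 // -mulrA.
Qed.

Lemma final (i j : nat) : poch a i / (poch (1 - a) j * (j`!)%:R) =
  poch a (i%:Z - j%:Z) *
  \sum_(k < j.+1) ((-1) ^+ (j - k) / (poch (1 - a) k * ((j - k)`!)%:R)) * 'C(i + k.-1, k)%:R.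
Proof.
have e : (i%:Z) = (i%:Z - j%:Z) + j%:Z by ring.
rewrite [in LHS]e poch_addz // -mulrA; congr (_ * _).
have -> : a + (i%:Z - j%:Z)%:~R = i%:R + (a - j%:R) by rewrite rmorphB /= -!pmulrn; ring.
rewrite -rvand mulr_suml; apply: eq_bigr => [[k hk]] _ /=.
have hkj : (k <= j)%N by lia.
rewrite poch_nat.
have -> : 'C(i + k - 1, k) = 'C(i + k.-1, k) by case: k {hk hkj} => [|k]; rewrite ?bin0 //; congr 'C(_, _); lia.
have e1 : a - j%:R = (a - k%:R) - (j - k)%N%:R by rewrite natrB //; ring.
rewrite e1 poch_rev.
have e2 : poch (1 - a) j = poch (1 - a) k * poch (1 - (a - k%:R)) (j - k)%N.
  have -> : 1 - (a - k%:R) = (1 - a) + k%:R by ring.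
  by rewrite -poch_add_nat subnKC.
have e3 : (j`!)%:R = 'C(j, k)%:R * (k`!)%:R * ((j - k)`!)%:R :> R.
  by rewrite -!natrM -mulnA bin_fact.
have n1 : poch (1 - (a - k%:R)) (j - k)%N != 0.
  by apply/negP => /eqP h; move: (P1_neq0 j); rewrite e2 h mulr0 eqxx.
have := P1_neq0 k; have := fact_neq0 R k; have := fact_neq0 R (j - k).
have nC : 'C(j, k)%:R != 0 :> R by rewrite pnatr_eq0 -lt0n bin_gt0.
rewrite e2 e3 !natrM => n2 n3 n4.
field.
by rewrite n1 n2 n3 n4 nC.
Qed.
End M.

From Stdlib Require Import FunctionalExtensionality.

Theorem mainTheorem11 (R : numClosedFieldType) (a d : R)
  (ha : forall z : int, a != z%:~R)
  (hd : forall n : nat, d != - n%:R) :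
  fps2_mul (F11 a d) (F01 (1 - a)) =
  fps2_add (fps2_negy (H5 a d))
    (fps2_sum_xy (fun k l =>
       fps2_scale
         ((-1) ^+ (k - l) * ((k.-1)`!)%:R / ((l.-1)`!)%:R / (l`!)%:R / ((k - l)`!)%:R
          / (poch (1 - a) k * poch (1 - a) (k - l)%N * poch d l))
         (fps2_negy (H5 (a - k%:R + l%:R) (d + l%:R))))).
Proof.
apply: functional_extensionality => i; apply: functional_extensionality => j.
rewrite mul_coef; last first.
- by move=> p q /negbTE; rewrite /F01 => ->.
- by move=> p q /negbTE; rewrite /F11 => ->.
rewrite /fps2_add -[fps2_sum_xy _ i j]/(fps2_sum_xy (Gf a d) i j) sumxy //.
rewrite /F11 /F01 /fps2_negy /H5 /=.
have hf := final ha i j.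
rewrite big_ord_recl /= subn0 poch0 bin0 mul1r mulr1 in hf.
rewrite big_add1 /= big_mkord.
have nD := Pd_neq0 hd i; have nP := P1_neq0 ha j.
have ni := fact_neq0 R i; have nj := fact_neq0 R j.
have -> : poch a i / (poch d i * (i`!)%:R) * (poch (1 - a) j * (j`!)%:R)^-1 =
  (poch a i / (poch (1 - a) j * (j`!)%:R)) / (poch d i * (i`!)%:R).
  by field; rewrite nD nP ni nj.
rewrite hf.
under eq_bigr => k _ do rewrite /bump leq0n add0n add1n.
set S := \sum_(k < j) _.
by field; rewrite nD ni nj.
Qed.
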